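(* For every preference profile $P$, every Pareto-optimal assignment belongs to the top cycle, i.e. $\mathit{PO}(P)\subseteq \mathit{TC}(P)$.
   Context: Let $N=\{1,\dots,n\}$ be agents and $H$ a set of $n$ houses. A profile $P=(\succ_1,\dots,\succ_n)$ gives each agent a strict linear order on $H$. An assignment is a bijection $\mu:N\to H$; $M$ is the set of all assignments. Agent $x$ weakly prefers $\mu$ to $\lambda$ if $\mu(x)\succ_x\lambda(x)$ or $\mu(x)=\lambda(x)$, strictly if $\mu(x)\succ_x\lambda(x)$. $N_{\mu,\lambda}$ is the set of agents weakly preferring $\mu$ to $\lambda$; $\mu\succsim\lambda$ if $|N_{\mu,\lambda}|\ge|N_{\lambda,\mu}|$, and $\succsim^*$ is the transitive closure of $\succsim$. The top cycle is $\mathit{TC}(P)=\{\mu\in M:\mu\succsim^*\lambda\text{ for all }\lambda\in M\}$. $\mu$ Pareto-dominates $\lambda$ if all agents weakly prefer $\mu$ to $\lambda$ and some agent strictly; $\mathit{PO}(P)$ is the set of assignments not Pareto-dominated by any assignment. *)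

(* Defs.v *)
From Stdlib Require Import Relation_Operators.
From mathcomp Require Import all_boot.
Set Implicit Arguments. Unset Strict Implicit. Unset Printing Implicit Defensive.

(* A profile assigns to each agent x a relation [P x : rel H], read
   "h is strictly preferred to h' by x", required to be a strict linear order. *)
Definition strict_linear_order (H : finType) (r : rel H) : Prop :=
  irreflexive r /\ transitive r /\ (forall h h', h != h' -> r h h' || r h' h).

Definition profile (N H : finType) := N -> rel H.

Definition valid_profile (N H : finType) (P : profile N H) : Prop :=
  forall x, strict_linear_order (P x).

Definition assignment (N H : finType) (mu : N -> H) : Prop := bijective mu.

Definition wpref (N H : finType) (P : profile N H) (x : N) (mu la : N -> H) : bool :=
  P x (mu x) (la x) || (mu x == la x).

Definition spref (N H : finType) (P : profile N H) (x : N) (mu la : N -> H) : bool :=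
  P x (mu x) (la x).

Definition Nset (N H : finType) (P : profile N H) (mu la : N -> H) : {set N} :=
  [set x | wpref P x mu la].

Definition maj (N H : finType) (P : profile N H) (mu la : N -> H) : Prop :=
  #|Nset P la mu| <= #|Nset P mu la|.

Definition majM (N H : finType) (P : profile N H) : (N -> H) -> (N -> H) -> Prop :=
  fun mu la => assignment mu /\ assignment la /\ maj P mu la.

Definition maj_star (N H : finType) (P : profile N H) : (N -> H) -> (N -> H) -> Prop :=
  clos_trans (N -> H) (majM P).

Definition top_cycle (N H : finType) (P : profile N H) (mu : N -> H) : Prop :=
  assignment mu /\ forall la, assignment la -> maj_star P mu la.

Definition pareto_dominates (N H : finType) (P : profile N H) (mu la : N -> H) : Prop :=
  (forall x, wpref P x mu la) /\ exists x, spref P x mu la.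

Definition pareto_optimal (N H : finType) (P : profile N H) (mu : N -> H) : Prop :=
  assignment mu /\ ~ exists la, assignment la /\ pareto_dominates P la mu.

(* Main.v *)
Require Import Defs.
From mathcomp Require Import all_boot.
From mathcomp Require Import fingroup perm.
From Stdlib Require Import Relation_Operators.

Theorem proposition4p3 (N H : finType) (P : profile N H) :
  #|H| = #|N| -> valid_profile P ->
  forall mu : N -> H, pareto_optimal P mu -> top_cycle P mu.
Proof.
move=> _ hv mu [hmu hpo].
split => //.
have asym : forall x a b, P x a b -> P x b a -> False.
  move=> x a b h1 h2; case: (hv x) => irr [tr _].
  by move: (tr _ _ _ h1 h2); rewrite irr.
have main : forall k la, assignment la ->
    #|[set z | mu z != la z]| <= k -> maj_star P mu la.
  elim=> [|k IH] la hla hk.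
  - apply: t_step; split; [done|split; [done|]].
    have E : forall z, la z = mu z.
      move=> z; apply/eqP; rewrite eq_sym; apply/negPn/negP => hz.
      move: hk; rewrite leqn0 cards_eq0 => /eqP/setP/(_ z).
      by rewrite !inE hz.
    rewrite /maj /Nset; apply: subset_leq_card; apply/subsetP => z _.
    by rewrite inE /wpref E eqxx orbT.
  - case: (boolP [exists z, mu z != la z]) => [/existsP [z0 hz0]|]; last first.
      rewrite negb_exists => /forallP hall.
      apply: t_step; split; [done|split; [done|]].
      rewrite /maj /Nset; apply: subset_leq_card; apply/subsetP => z _.
      by move: (hall z); rewrite negbK inE /wpref => /eqP ->; rewrite eqxx orbT.
    case: (boolP [exists x, P x (mu x) (la x)]) => [/existsP [x hx]|]; last first.
      rewrite negb_exists => /forallP hall; exfalso; apply: hpo; exists la.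
      split=> //; split.
      + move=> z; rewrite /wpref.
        case: (eqVneq (la z) (mu z)) => [->|hne]; first by rewrite ?eqxx orbT.
        case: (hv z) => _ [_ tot]; move: (tot _ _ hne); move: (hall z).
        by case: (P z (mu z) (la z)) => //= _ ->.
      + exists z0; rewrite /spref.
        case: (hv z0) => _ [_ tot]; move: (tot _ _ hz0); move: (hall z0).
        by case: (P z0 (mu z0) (la z0)).
    case: (hla) => g lag gla.
    set y := g (mu x).
    have hly : la y = mu x by rewrite /y gla.
    have hxy : x != y.
      apply/eqP => exy; move: hx; rewrite -hly -exy.
      by case: (hv x) => irr _; rewrite irr.
    pose la' := la \o (tperm x y).
    have hla' : assignment la'.
      apply: bij_comp => //; apply: inv_bij; exact: tpermK.
    apply: (@t_trans _ _ _ la').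
      apply: (IH la' hla').
      have sub : [set z | mu z != la' z] \subset [set z | mu z != la z] :\ x.
        apply/subsetP => z; rewrite !inE /la' /=.
        case: (tpermP x y z) => [->|->|hzx hzy].
        - by rewrite hly eqxx.
        - move=> _; rewrite hly eq_sym hxy /=.
          apply: contra hxy => /eqP e; apply/eqP; apply: (bij_inj hmu); exact: esym e.
        - by move=> ->; rewrite andbT; apply/eqP.
      have hxS : x \in [set z | mu z != la z].
        rewrite inE; apply/eqP => e; move: hx; rewrite e.
        by case: (hv x) => irr _; rewrite irr.
      move: hk; rewrite (cardsD1 x) hxS add1n ltnS; apply: leq_trans.
      exact: subset_leq_card.
    apply: t_step; split; [done|split; [done|]].
    rewrite /maj.
    apply: (@leq_trans #|[set~ x]|).
      apply: subset_leq_card; apply/subsetP => z; rewrite !inE /wpref /la' /=.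
      apply: contraTneq => ->; rewrite tpermL hly.
      apply/norP; split; last by apply/eqP => e; move: hx; rewrite e; case: (hv x) => irr _; rewrite irr.
      by apply/negP => h; apply: (asym _ _ _ hx h).
    rewrite cardsC1 -(cardsC1 y).
    apply: subset_leq_card; apply/subsetP => z; rewrite !inE /wpref /la' /=.
    case: (tpermP x y z) => [->|->|hzx hzy] hz.
    - by rewrite hly hx.
    - by rewrite eqxx in hz.
    - by rewrite eqxx orbT.
move=> la hla; apply: (main #|N|) => //; exact: max_card.
Qed.
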